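(* Let $G$ be a compact group and $V$ a finite-dimensional unitary complex representation with $V\cong\bigoplus_{\ell=1}^L V_\ell^{\oplus R_\ell}$, where the $V_\ell$ are pairwise non-isomorphic irreducible representations with $\dim V_\ell=N_\ell$. Represent each $f\in V$ by an $L$-tuple $(A_1,\ldots,A_L)$ of complex $N_\ell\times R_\ell$ matrices (the $i$-th column of $A_\ell$ being the coordinates, in a fixed orthonormal basis of $V_\ell$, of the component of $f$ in the $i$-th copy of $V_\ell$), and let $H=\prod_{\ell=1}^L U(N_\ell)$ act by $(U_\ell)_\ell\cdot(A_\ell)_\ell=(U_\ell A_\ell)_\ell$. Let $\mathcal L_f$ denote the complex linear span of the orbit $H\cdot f$. Then $$\dim_{\mathbb C}\mathcal L_f=\sum_{\ell=1}^L(\operatorname{rank}A_\ell)\,N_\ell,$$ and in particular $\dim_{\mathbb C}\mathcal L_f\le\sum_{\ell=1}^L\min(N_\ell R_\ell,N_\ell^2)$.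
   Context: $\mathcal L_f=\{\sum_i a_i(h_i\cdot f): a_i\in\mathbb C,\ h_i\in H\}$ is the smallest complex linear subspace of $V$ containing $H\cdot f$. *)

(* Defs.v *)
From Stdlib Require List.
From mathcomp Require Import all_boot all_algebra.
From mathcomp Require Import complex.
From mathcomp Require Import reals.

Set Implicit Arguments.
Unset Strict Implicit.
Unset Printing Implicit Defensive.

Import GRing.Theory Num.Theory.
Local Open Scope ring_scope.

Section MxTuples.
Variables (C : numClosedFieldType) (L : nat) (N Rk : 'I_L -> nat).

Definition mxtuple := forall l : 'I_L, 'M[C]_(N l, Rk l).

Definition Htuple := forall l : 'I_L, 'M[C]_(N l).

Definition unitary_mx n (U : 'M[C]_n) : bool :=
  U *m (map_mx Num.conj U)^T == 1%:M.

Definition inH (U : Htuple) : Prop := forall l, unitary_mx (U l).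

Definition Hact (U : Htuple) (A : mxtuple) : mxtuple := fun l => U l *m A l.

Definition coordT := {l : 'I_L & ('I_(N l) * 'I_(Rk l))%type}.
Definition Vspace := {ffun coordT -> C^o}.

Definition enc (A : mxtuple) : Vspace :=
  [ffun t => A (tag t) (tagged t).1 (tagged t).2].

Definition Lspan (A : mxtuple) (v : Vspace) : Prop :=
  exists s : seq (C * Htuple),
    (forall p : C * Htuple, Stdlib.Lists.List.In p s -> inH p.2) /\
    v = \sum_(p <- s) p.1 *: enc (Hact p.2 A).

End MxTuples.

(* Main.v *)
From HB Require Import structures.
Require Import Defs.
From Stdlib Require List.
From mathcomp Require Import all_boot all_algebra.
From mathcomp Require Import complex.
From mathcomp Require Import reals.
From mathcomp Require Import fingroup perm ring.
Import GRing.Theory Num.Theory.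
Local Open Scope ring_scope.
Set Implicit Arguments.
Unset Strict Implicit.

Section Gen.
Variables (C : numClosedFieldType) (L : nat) (N Rk : 'I_L -> nat) (A : mxtuple C N Rk).

Lemma Lspan0 : Lspan A 0.
Proof. by exists [::]; split => //; rewrite big_nil. Qed.

Lemma LspanD v w : Lspan A v -> Lspan A w -> Lspan A (v + w).
Proof.
move=> [s1 [H1 ->]] [s2 [H2 ->]]; exists (s1 ++ s2); split; last by rewrite big_cat.
by move=> p Hp; case: (List.in_app_or _ _ _ Hp) => [/H1|/H2].
Qed.

Lemma LspanZ c v : Lspan A v -> Lspan A (c *: v).
Proof.
move=> [s [H ->]]; exists (map (fun p => (c * p.1, p.2)) s); split.
  by move=> p Hp; case: (proj1 (List.in_map_iff _ _ _) Hp) => q [<- /H].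
by rewrite big_map scaler_sumr; apply: eq_bigr => p _; rewrite scalerA.
Qed.

Definition unit1 n : unitary_mx (1%:M : 'M[C]_n).
Proof. by rewrite /unitary_mx map_mx1 trmx1 mul1mx. Qed.

Lemma unitN n (U : 'M[C]_n) : unitary_mx U -> unitary_mx (- U).
Proof. by rewrite /unitary_mx map_mxN linearN /= mulNmx mulmxN opprK. Qed.

Lemma unitM n (U V : 'M[C]_n) : unitary_mx U -> unitary_mx V -> unitary_mx (U *m V).
Proof.
rewrite /unitary_mx map_mxM trmx_mul => /eqP hU /eqP hV.
by rewrite mulmxA -(mulmxA U) hV mulmx1 hU.
Qed.

Lemma unitP n (s : 'S_n) : unitary_mx (perm_mx s : 'M[C]_n).
Proof. by rewrite /unitary_mx map_perm_mx tr_perm_mx -perm_mxM mulgV perm_mx1. Qed.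

Definition Dmx n (j : 'I_n) : 'M[C]_n := 1%:M - 2%:R *: delta_mx j j.

Lemma unitD n (j : 'I_n) : unitary_mx (Dmx j).
Proof.
have ht : (Dmx j)^T = Dmx j.
  apply/matrixP => a b; rewrite !mxE; case: (eqVneq a b) => [->//|nab].
  by rewrite andbC.
rewrite /unitary_mx (_ : map_mx _ (Dmx j) = Dmx j); last first.
  by rewrite /Dmx map_mxB map_mxZ map_mx1 map_delta_mx rmorph_nat.
rewrite ht /Dmx.
rewrite mulmxBl !mulmxBr !mul1mx.
rewrite -!scalemxAl mulmx1 -scalemxAr mul_delta_mx scalerA.
apply/eqP; rewrite -scalerBl -[in LHS]addrA -scaleNr -scalerBl.
have -> : (- 2 - (2 - 2 * 2) : C) = 0 by ring.
by rewrite scale0r addr0.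
Qed.

Lemma delta_dec n (i j : 'I_n) :
  delta_mx i j = (2%:R^-1 : C) *: perm_mx (tperm i j) - (2%:R^-1 : C) *: (perm_mx (tperm i j) *m Dmx j).
Proof.
have hE : perm_mx (tperm i j) *m delta_mx j j = delta_mx i j :> 'M[C]_n.
  rewrite -row_permE; apply/matrixP => a b; rewrite !mxE.
  congr ((_ && _ : bool)%:R); apply/eqP/eqP => [h|->]; last by rewrite tpermL.
  by apply: (@perm_inj _ (tperm i j)); rewrite h tpermL.
rewrite /Dmx mulmxBr mulmx1 -scalemxAr hE -scalerBr opprB addrC subrK scalerA mulVf ?scale1r //.
by rewrite pnatr_eq0.
Qed.

Definition blockt l (M : 'M[C]_(N l, Rk l)) : mxtuple C N Rk :=
  dfwith (fun k => 0 : 'M[C]_(N k, Rk k)) M.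
Definition oneU l (U : 'M[C]_(N l)) : Htuple C N :=
  dfwith (fun k => 1%:M : 'M[C]_(N k)) U.

Lemma inH_oneU l U : unitary_mx U -> inH (@oneU l U).
Proof. by move=> hU k; rewrite /oneU; case: dfwithP => // k' _; apply: unit1. Qed.

Lemma block_unit l (U : 'M[C]_(N l)) : unitary_mx U -> Lspan A (enc (blockt (U *m A l))).
Proof.
move=> hU; exists [:: (2%:R^-1, oneU U); (- 2%:R^-1, oneU (- U))]; split.
  move=> p [<-|[<-|[]]]; apply: inH_oneU => //; exact: unitN.
rewrite !big_cons big_nil addr0; apply/ffunP => -[k [a b]]; rewrite !ffunE /=.
rewrite /Hact /blockt /oneU; case: (eqVneq l k) => [e|ne].
  subst k; rewrite !dfwith_in mulNmx !mxE.
  rewrite scaleNr scalerN opprK -scalerDl (_ : 2%:R^-1 + 2%:R^-1 = 1) ?scale1r //.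
  by field.
by rewrite !dfwith_out // mxE -scalerDl subrr scale0r.
Qed.

Lemma encbD l (M1 M2 : 'M[C]_(N l, Rk l)) :
  enc (blockt (M1 + M2)) = enc (blockt M1) + enc (blockt M2).
Proof.
apply/ffunP => -[k [a b]]; rewrite !ffunE /= /blockt; case: (eqVneq l k) => [e|ne].
  by subst k; rewrite !dfwith_in mxE.
by rewrite !dfwith_out // mxE addr0.
Qed.

Lemma encbZ l c (M : 'M[C]_(N l, Rk l)) :
  enc (blockt (c *: M)) = c *: enc (blockt M).
Proof.
apply/ffunP => -[k [a b]]; rewrite !ffunE /= /blockt; case: (eqVneq l k) => [e|ne].
  by subst k; rewrite !dfwith_in mxE.
by rewrite !dfwith_out // mxE scaler0.
Qed.

Lemma encb0 l : enc (blockt (0 : 'M[C]_(N l, Rk l))) = 0.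
Proof. by rewrite -(scale0r (0 : 'M[C]_(N l, Rk l))) encbZ scale0r. Qed.

Lemma block_all l (M : 'M[C]_(N l, Rk l)) : (M <= A l)%MS -> Lspan A (enc (blockt M)).
Proof.
move=> hM; rewrite -(mulmxKpV hM) [X in X *m _]matrix_sum_delta mulmx_suml.
apply: (big_ind (fun M => Lspan A (enc (blockt M)))) => [|x y hx hy|a _].
- by rewrite encb0; apply: Lspan0.
- by rewrite encbD; apply: LspanD.
rewrite mulmx_suml.
apply: (big_ind (fun M => Lspan A (enc (blockt M)))) => [|x y hx hy|b _].
- by rewrite encb0; apply: Lspan0.
- by rewrite encbD; apply: LspanD.
rewrite -scalemxAl encbZ; apply: LspanZ.
rewrite delta_dec mulmxBl -!scalemxAl -scaleNr encbD !encbZ.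
apply: LspanD; apply: LspanZ; apply: block_unit; first exact: unitP.
by apply: unitM; [apply: unitP | apply: unitD].
Qed.

Definition cT := {l : 'I_L & ('I_(N l) * 'I_(\rank (A l)))%type}.
Definition Xs := {ffun cT -> C^o}.
Definition blk (x : Xs) l : 'M[C]_(N l, \rank (A l)) :=
  \matrix_(i, j) x (Tagged (fun k => ('I_(N k) * 'I_(\rank (A k)))%type) (i, j)).
Definition Phi (x : Xs) : Vspace C N Rk := enc (fun l => blk x l *m row_base (A l)).

Lemma Phi_lin : linear Phi.
Proof.
move=> c x y; apply/ffunP => -[k [a b]]; rewrite !ffunE /=.
have -> : blk (c *: x + y) k = c *: blk x k + blk y k.
  by apply/matrixP => i j; rewrite !mxE !ffunE.
by rewrite mulmxDl -scalemxAl !mxE.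
Qed.

HB.instance Definition _ := GRing.isLinear.Build C Xs (Vspace C N Rk) *:%R Phi Phi_lin.

Lemma Phi_inj : injective Phi.
Proof.
move=> x y hxy; apply/ffunP => -[k [a b]].
have hk : blk x k *m row_base (A k) = blk y k *m row_base (A k).
  apply/matrixP => i j.
  have := congr1 (fun f : Vspace C N Rk => f (Tagged (fun k => ('I_(N k) * 'I_(Rk k))%type) (i, j))) hxy.
  by rewrite /Phi !ffunE.
have := row_free_inj (row_base_free (A k)) hk => /matrixP /(_ a b).
by rewrite !mxE.
Qed.

Lemma card_cT : #|{: cT}| = (\sum_(l < L) \rank (A l) * N l)%N.
Proof.
rewrite card_tagged sumnE big_map big_enum /=; apply: eq_bigr => l _.
by rewrite card_prod !card_ord mulnC.
Qed.

End Gen.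

Theorem proposition3p5 (R : realType) (L : nat) (N Rk : 'I_L -> nat)
    (A : mxtuple R[i] N Rk) :
  exists Lf : {vspace Vspace R[i] N Rk},
    (forall v, v \in Lf <-> Lspan A v) /\
    (\dim Lf = \sum_(l < L) \rank (A l) * N l)%N /\
    (\dim Lf <= \sum_(l < L) minn (N l * Rk l) (N l * N l))%N.
Proof.
set f := linfun (@Phi _ _ _ _ A).
have hdim : \dim (limg f) = (\sum_(l < L) \rank (A l) * N l)%N.
  rewrite limg_dim_eq; last first.
    have /lker0P/eqP -> : injective f by move=> x y; rewrite !lfunE; apply: Phi_inj.
    by rewrite capv0.
  rewrite dimvf /dim /=.
  have := card_cT A; rewrite /cT => ->.
  by rewrite muln1.
exists (limg f); split; last first.
  split => //; rewrite hdim; apply: leq_sum => l _; rewrite leq_min.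
  by rewrite mulnC !leq_mul2l rank_leq_col rank_leq_row !orbT.
move=> v; split.
  case/memv_imgP => x _ ->; rewrite lfunE /=.
  have -> : Phi x = \sum_(l < L) enc (blockt (blk x l *m row_base (A l))).
    apply/ffunP => -[k [a b]]; rewrite sum_ffunE (bigD1 k) //= big1 ?addr0.
      by rewrite !ffunE /blockt /= dfwith_in.
    by move=> l nl; rewrite !ffunE /blockt /= dfwith_out // mxE.
  apply: (big_ind (Lspan A)) => [|x1 x2|l _]; first exact: Lspan0.
    exact: LspanD.
  apply: block_all; apply: (submx_trans (submxMl _ _)).
  by rewrite eq_row_base.
case=> s [_ ->]; apply: rpred_sum => p _; apply: rpredZ.
set U := p.2.
pose x : Xs A := [ffun t => (Hact U A (tag t) *m pinvmx (row_base (A (tag t))))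
   (tagged t).1 (tagged t).2].
have -> : enc (Hact U A) = f x.
  rewrite lfunE; apply/ffunP => -[k [a b]]; rewrite !ffunE /=.
  have -> : blk x k = Hact U A k *m pinvmx (row_base (A k)).
    by apply/matrixP => i j; rewrite [LHS]mxE /x ffunE.
  rewrite mulmxKpV // /Hact eq_row_base; exact: submxMl.
exact: memv_img (memvf x).
Qed.
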